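(* Let $a=(a_i)_{i\in\mathbb Z}$ be any sequence of complex numbers and let $\mu=(p_1,\dots,p_d\mid q_1,\dots,q_d)$ be a Young diagram in Frobenius notation. Then $s_{\mu;a}=\det[s_{(p_i\mid q_j);a}]_{i,j=1}^d$ (Giambelli formula), where $(p\mid q)$ denotes the hook diagram with Frobenius coordinates $p,q$.
   Context: $\Lambda$ is the algebra of symmetric functions over $\mathbb C$ with complete homogeneous $h_k$ and elementary $e_k$. For a sequence $a=(a_i)_{i\in\mathbb Z}$ define $h_{k;a}=\sum_{i=1}^k(-1)^{k-i}e_{k-i}(a_1,\dots,a_{k-1})h_i$ for $k\ge1$, $h_{0;a}=1$, $h_{k;a}=0$ for $k<0$; let $(\tau^ra)_i=a_{i+r}$; and set $s_{\mu;a}=\det[h_{\mu_i-i+j;\,\tau^{1-j}a}]_{i,j=1}^N$ for any $N\ge\ell(\mu)$. Frobenius notation: a Young diagram $\mu$ with $d$ diagonal boxes is written $(p_1,\dots,p_d\mid q_1,\dots,q_d)$ with $p_i=\mu_i-i$, $q_i=\mu'_i-i$, $\mu'$ the transposed diagram. *)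

(* Defs.v *)
From HB Require Import structures.
From mathcomp Require Import all_boot all_order all_algebra.
From mathcomp Require Import complex.
From mathcomp Require Import Rstruct.
From mathcomp Require Import mpoly.
Set Implicit Arguments. Unset Strict Implicit. Unset Printing Implicit Defensive.
Import Order.TTheory GRing.Theory Num.Theory.
Local Open Scope ring_scope.

Definition CC : fieldType := complex Rdefinitions.R.

(* A model of the algebra of symmetric functions: a commutative C-algebra A
   together with a family h : nat -> A (h k plays the role of the complete
   homogeneous symmetric function h_k, k >= 1) such that h_1, h_2, ... are
   algebraically independent over C.  Since Lambda = C[h_1, h_2, ...] freely,
   the subalgebra generated by the h_k is then a copy of Lambda. *)
Definition alg_indep (A : comAlgType CC) (h : nat -> A) : Prop :=
  forall (n : nat) (p : mpoly.mpoly n CC),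
    mpoly.mmap (in_alg A) (fun i : 'I_n => h (nat_of_ord i).+1) p = 0 -> p = 0.

Fixpoint esym_seq (k : nat) (s : seq CC) : CC :=
  match s with
  | [::] => if k is 0%N then 1 else 0
  | x :: s' => if k is k'.+1 then esym_seq k s' + x * esym_seq k' s'
               else 1
  end.

Definition tau (r : int) (a : int -> CC) : int -> CC := fun i => a (i + r).

Definition hk (A : comAlgType CC) (h : nat -> A) (k : int) (a : int -> CC) : A :=
  match k with
  | Posz 0 => 1
  | Posz k'.+1 =>
      \sum_(1 <= i < k'.+2)
        ((-1) ^+ (k'.+1 - i) * esym_seq (k'.+1 - i)
             [seq a (Posz j) | j <- iota 1 k']) *: h i
  | Negz _ => 0
  end.

Definition is_partition (mu : seq nat) : bool :=
  sorted geq mu && all (fun m => 0 < m)%N mu.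

(* s_{mu;a} = det [ h_{mu_i - i + j; tau^{1-j} a} ]_{i,j=1}^N, here with N = l(mu)
   (indices below are 0-based: row i, column j stand for i+1, j+1). *)
Definition schur_a (A : comAlgType CC) (h : nat -> A) (mu : seq nat) (a : int -> CC) : A :=
  \det (\matrix_(i < size mu, j < size mu)
          hk h ((nth 0%N mu i)%:Z - (i.+1)%:Z + (j.+1)%:Z)
                (tau (1 - (j.+1)%:Z) a)).

Definition conj_part (mu : seq nat) (j : nat) : nat := count (fun m => j <= m)%N mu.

Definition durfee (mu : seq nat) : nat :=
  count (fun i => i <= nth 0%N mu i.-1)%N (iota 1 (size mu)).

(* Frobenius coordinates (1-based i): p_i = mu_i - i, q_i = mu'_i - i. *)
Definition frob_p (mu : seq nat) (i : nat) : nat := (nth 0%N mu i.-1 - i)%N.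
Definition frob_q (mu : seq nat) (i : nat) : nat := (conj_part mu i - i)%N.

Definition hook (p q : nat) : seq nat := p.+1 :: nseq q 1%N.

(* Main.v *)
Require Import Defs.
From HB Require Import structures.
From mathcomp Require Import all_boot all_order all_algebra.
From mathcomp Require Import zify ring.
Set Implicit Arguments. Unset Strict Implicit. Unset Printing Implicit Defensive.
Import GRing.Theory.
Local Open Scope ring_scope.

Section Core.
Variable R : comPzRingType.

Definition Dn n (F : nat -> nat -> R) := \det (\matrix_(i < n, j < n) F i j).

Lemma eq_Dn n F G : (forall i j, (i < n)%N -> (j < n)%N -> F i j = G i j) -> Dn n F = Dn n G.
Proof.
move=> H; rewrite /Dn; congr (\det _); apply/matrixP => i j; rewrite !mxE; exact: H.
Qed.

Definition ev (k j : nat) : R := if j == k then 1 else 0.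

Lemma Dn_lastrow n F : (forall j, (j <= n)%N -> F n j = ev n j) -> Dn n.+1 F = Dn n F.
Proof.
move=> H; rewrite /Dn (expand_det_row _ ord_max) big_ord_recr /=.
rewrite big1 ?add0r; last first.
  move=> j _; rewrite mxE H /ev /=; last by rewrite ltnW.
  by rewrite ltn_eqF // mul0r.
rewrite mxE H // /ev eqxx mul1r /cofactor /=.
rewrite addnn -mul2n exprM sqrrN !expr1n mul1r.
congr (\det _); apply/matrixP => i j; rewrite !mxE.
by rewrite !lift_max.
Qed.


Definition Emx (c : nat -> nat -> R) d (ks : seq nat) : nat -> nat -> R :=
  fun i j => if (i < d)%N then c i j else ev (nth 0%N ks (i - d)) j.

Definition fN n (v : nat -> R) t : R :=
  Dn n (fun i j => if i == 0%N then v j else ev (bump t i.-1) j).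

Lemma fN_lt n v t : (t < n)%N -> fN n.+1 v t = fN n v t.
Proof.
move=> tn; rewrite /fN Dn_lastrow //.
move=> j _; case: n tn => [//|n] tn /=.
by rewrite /bump -ltnS tn add1n.
Qed.

Lemma fN_top n v : fN n.+1 v n = (-1) ^+ n * v n.
Proof.
rewrite /fN /Dn (expand_det_col _ ord_max) (bigD1 ord0) //= big1 ?addr0; last first.
  move=> [[|i] ilt] //= _; rewrite mxE /= /ev /bump.
  have ni : (n <= i)%N = false by rewrite leqNgt -ltnS ilt.
  by rewrite ni /= add0n gtn_eqF ?mul0r // -ltnS.
rewrite mxE /= /cofactor /= add0n mulrCA; congr (_ * _).
rewrite -[RHS]mulr1; congr (_ * _).
rewrite -(det1 R n); congr (\det _); apply/matrixP => i j; rewrite !mxE /= /ev /bump.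
rewrite !add0n (leqNgt n j) (leqNgt n i) !ltn_ord /= !add0n.
have -> : (i == j) = (nat_of_ord i == nat_of_ord j) by [].
by rewrite eq_sym; case: (_ == _).
Qed.


Lemma sorted_rcons_lt (s : seq nat) x y : sorted ltn (rcons s x) -> y \in s -> (y < x)%N.
Proof.
move=> H; have : sorted (fun a b => (b < a)%N) (rev (rcons s x)) by rewrite rev_sorted.
have tr : transitive (fun a b : nat => (b < a)%N) by move=> a b c' H1 H2; exact: ltn_trans H2 H1.
rewrite rev_rcons /= => /(order_path_min tr).
by rewrite all_rev => /allP H' /H'.
Qed.

Lemma gtn_tr : transitive gtn.
Proof. by move=> a b c' H1 H2; exact: ltn_trans H2 H1. Qed.

Lemma core n : forall d (c : nat -> nat -> R) ts ks, size ts = d -> sorted gtn ts ->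
  sorted ltn ks -> perm_eq (ts ++ ks) (iota 0 n) ->
  Dn n (Emx c d ks) = Dn d (fun i j => fN n (c i) (nth 0%N ts j)).
Proof.
elim: n => [|n IH] d c ts ks <- sts sks pe.
  have := perm_size pe; rewrite size_cat /=; case: ts {sts pe} => //= _.
  by rewrite /Dn !det_mx00.
have memE x : (x \in ts ++ ks) = (x < n.+1)%N by rewrite (perm_mem pe) mem_iota.
have uq : uniq (ts ++ ks) by rewrite (perm_uniq pe) iota_uniq.
have sz : (size ts + size ks = n.+1)%N by rewrite -size_cat (perm_size pe) size_iota.
have iotaS : iota 0 n.+1 = iota 0 n ++ [:: n] by rewrite -addn1 iotaD.
case: (boolP (n \in ts)) => nts.
-
  case: ts nts sts pe memE uq sz => [//|x ts'] nts sts pe memE uq sz.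
  have xn : x = n.
    apply/eqP; move: nts; rewrite inE => /orP [/eqP -> //|nts'].
    have := order_path_min gtn_tr sts => /allP /(_ _ nts') /= nx.
    have := memE x; rewrite inE eqxx /= => /esym; rewrite ltnS => xn.
    by rewrite ltn_geF in nx.
  subst x.
  have nks : n \notin ks.
    by move: uq; rewrite cat_uniq => /and3P [_ /hasPn H _]; apply/negP => /H; rewrite inE eqxx.
  have pe' : perm_eq (ts' ++ ks) (iota 0 n).
    by rewrite -(perm_cons n) -cat_cons (perm_trans pe) // iotaS perm_catC.
  have sts' : sorted gtn ts' := path_sorted sts.
  rewrite /Dn (expand_det_col _ ord_max) [in RHS](expand_det_col _ ord0).
  pose F i := if (i < (size ts').+1)%N then c i n * ((-1) ^+ (i + n) *
        Dn n (Emx (fun k => c (bump i k)) (size ts') ks)) else 0.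
  transitivity (\sum_(i < n.+1) F i).
    apply: eq_bigr => i _; rewrite mxE /Emx /F /=.
    case: ifP => id; last first.
      rewrite /ev; case: eqP => [E|]; last by rewrite mul0r.
      exfalso; move: nks; rewrite E mem_nth //.
      by move: sz => /=; move: (ltn_ord i) id; lia.
    congr (_ * _); rewrite /cofactor; congr (_ * _).
    rewrite /Dn; congr (\det _); apply/matrixP => k l; rewrite !mxE lift_max /=.
    rewrite /Emx /bump; case: (leqP i k) => ik /=.
      rewrite add1n ltnS.
      by case: ifP => // _; rewrite subSn //; move: (ltn_ord k) id ik; lia.
    rewrite add0n; have -> : (k < (size ts').+1)%N by lia.
    by have -> : (k < size ts')%N by move: id; lia.
  have dle : ((size ts').+1 <= n.+1)%N by move: sz => /=; lia.
  transitivity (\sum_(i < (size ts').+1) F i).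
    rewrite (big_ord_widen _ F dle) [RHS]big_mkcond /=; apply: eq_bigr => i _.
    by rewrite /F; case: ifP.
  have nts' : n \notin ts' by move: uq; rewrite cat_cons /= mem_cat negb_or => /andP [/andP []].
  apply: eq_bigr => i _; rewrite /F ltn_ord mxE /= fN_top /cofactor addn0.
  rewrite (IH (size ts') (fun k => c (bump i k)) ts' ks erefl sts' sks pe').
  have -> : Dn (size ts') (fun k l => fN n (c (bump i k)) (nth 0%N ts' l)) =
    \det (row' i (col' ord0 (\matrix_(i0 < (size ts').+1, j < (size ts').+1) fN n.+1 (c i0) (nth 0%N (n :: ts') j)))).
    rewrite /Dn; congr (\det _); apply/matrixP => k l; rewrite !mxE /= /bump /= add0n.
    rewrite fN_lt //.
    have : nth 0%N ts' l \in ts' by rewrite mem_nth.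
    have := memE (nth 0%N ts' l); rewrite cat_cons inE mem_cat => + H; rewrite H orbT /= => /esym.
    rewrite ltnS leq_eqVlt => /orP [/eqP E|//]; by move: nts'; rewrite -E H.
  rewrite exprD; ring.
- have nks : n \in ks by have := memE n; rewrite ltnSn mem_cat (negbTE nts) /=.
  case/lastP: ks sks pe memE uq sz nks => [//|ks' x] sks pe memE uq sz nks.
  have xn : x = n.
    move: nks; rewrite mem_rcons inE => /orP [/eqP -> //|nks'].
    have := sorted_rcons_lt sks nks' => nx.
    have := memE x; rewrite mem_cat mem_rcons inE eqxx orbT /= => /esym; rewrite ltnS => xn.
    exfalso; move: nx xn; lia.
  subst x.
  have sks' : sorted ltn ks' by move: sks; rewrite -cats1 => /cat_sorted2 [].
  have pe' : perm_eq (ts ++ ks') (iota 0 n) by rewrite -(perm_cat2r [:: n]) -catA cats1 -iotaS.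
  have dle : (size ts <= n)%N by move: sz; rewrite size_rcons; lia.
  rewrite Dn_lastrow; last first.
    move=> j _; rewrite /Emx ltnNge dle /= nth_rcons.
    have -> : (n - size ts = size ks')%N by move: sz; rewrite size_rcons; lia.
    by rewrite ltnn eqxx.
  transitivity (Dn n (Emx c (size ts) ks')).
    apply: eq_Dn => i j ilt _; rewrite /Emx; case: ifP => // id.
    rewrite nth_rcons; have -> // : (i - size ts < size ks')%N.
    by move: sz id ilt; rewrite size_rcons; lia.
  rewrite (IH _ c ts ks' erefl sts sks' pe').
  apply: eq_Dn => i j _ jlt; rewrite fN_lt //.
  have H : nth 0%N ts j \in ts by rewrite mem_nth.
  have := memE (nth 0%N ts j); rewrite mem_cat H /= => /esym; rewrite ltnS leq_eqVlt => /orP [/eqP E|//].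
  by move: nts; rewrite -E H.
Qed.

End Core.

Local Close Scope ring_scope.
Lemma cnt_dc n : forall (P : pred nat), (forall i j, i <= j -> j < n -> P j -> P i) ->
  forall i, i < n -> (i < count P (iota 0 n)) = P i.
Proof.
elim: n => [//|n IH] P dc i ilt.
have -> : iota 0 n.+1 = 0 :: map (addn 1) (iota 0 n) by rewrite /= -iotaDl.
rewrite /= count_map.
have IH' := IH (preim (addn 1) P).
have dc' : forall i j, i <= j -> j < n -> preim (addn 1) P j -> preim (addn 1) P i.
  move=> i' j' ij jn /=; apply: dc; lia.
case P0: (P 0).
  case: i ilt => [//|i] ilt; rewrite add1n ltnS IH' //=.
have c0 : count (preim (addn 1) P) (iota 0 n) = 0.
  case: n {IH ilt} IH' dc' dc => [//|n] IH' dc' dc.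
  apply/eqP; rewrite -leqn0 leqNgt IH' //= add1n.
  by apply/negP => /(dc 0 1) ; rewrite P0 => /(_ isT isT).
rewrite c0 /=; apply/esym/negbTE/negP => Pi.
by move: (dc 0 i (leq0n _) ilt Pi); rewrite P0.
Qed.

Lemma geq_tr : transitive geq.
Proof. by move=> a b c H1 H2; exact: leq_trans H2 H1. Qed.

Lemma mu_mono mu i j : sorted geq mu -> i <= j -> j < size mu -> nth 0 mu j <= nth 0 mu i.
Proof.
move=> s ij js; have := sorted_leq_nth geq_tr (@leqnn) 0 s.
by move=> /(_ i j); apply => //; rewrite inE; lia.
Qed.

Lemma conj_nth mu t i : sorted geq mu -> i < size mu ->
  (i < conj_part mu t) = (t <= nth 0 mu i).
Proof.
move=> s il; rewrite /conj_part -{1}(mkseq_nth 0 mu) /mkseq count_map.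
apply: cnt_dc => // i' j' ij jn /= H; apply: leq_trans H _; exact: mu_mono.
Qed.

Lemma durfee_nth mu i : sorted geq mu -> i < size mu ->
  (i < durfee mu) = (i.+1 <= nth 0 mu i).
Proof.
move=> s il; rewrite /durfee.
have -> : iota 1 (size mu) = map (addn 1) (iota 0 (size mu)) by rewrite -iotaDl.
rewrite count_map.
rewrite (@eq_count _ _ (fun i => i.+1 <= nth 0 mu i)); last by move=> x /=; rewrite add1n.
apply: cnt_dc => // i' j' ij jn /= H.
apply: leq_trans (mu_mono s ij jn); lia.
Qed.

Lemma sorted_map_iota (r : rel nat) f n : forall m,
  (forall i, m <= i -> i.+1 < m + n -> r (f i) (f i.+1)) -> sorted r (map f (iota m n)).
Proof.
elim: n => [//|n IH] m H /=.
case: n IH H => [//|n] IH H /=.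
apply/andP; split; first by apply: H; lia.
have := IH m.+1 => /= -> // i H1 H2; apply: H; lia.
Qed.

Local Open Scope ring_scope.

Local Open Scope ring_scope.
Section Main.
Variables (A : comAlgType CC) (h : nat -> A) (a : int -> CC).

Definition G (j : nat) (r : int) : A := hk h r (tau (1 - (j.+1)%:Z) a).
Definition PMf (pos : nat -> int) : nat -> nat -> A := fun i j => G j (pos i + (j.+1)%:Z).
Definition posm (mu : seq nat) (i : nat) : int := (nth 0%N mu i)%:Z - (i.+1)%:Z.

Lemma schurE mu : schur_a h mu a = Dn (size mu) (PMf (posm mu)).
Proof. by []. Qed.

Lemma G_neg j r : r < 0 -> G j r = 0.
Proof. by case: r => [n|n] //; rewrite ltz_nat. Qed.

Lemma G_ev j k : (j <= k)%N -> G j (- (k.+1)%:Z + (j.+1)%:Z) = ev A k j.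
Proof.
rewrite /ev leq_eqVlt => /orP [/eqP ->|jk].
  by rewrite eqxx addNr.
rewrite ltn_eqF // G_neg //; lia.
Qed.

Lemma pad n m pos : (n <= m)%N -> (forall i, (n <= i < m)%N -> pos i = - (i.+1)%:Z) ->
  Dn m (PMf pos) = Dn n (PMf pos).
Proof.
elim: m => [|m IH] nm H; first by case: n nm {H}.
case: (ltngtP n m.+1) nm => // [nm _|-> //].
rewrite Dn_lastrow ?IH //.
  by move=> i /andP [H1 H2]; apply: H; rewrite H1 ltnW.
by move=> j jm; rewrite /PMf H ?G_ev // ltnSn andbT -ltnS.
Qed.


Definition Bm N : 'M[A]_N := \matrix_(i < N, j < N) PMf (fun i => - (i.+1)%:Z) i j.

Lemma detB N : \det (Bm N) = 1.
Proof.
rewrite -det_tr det_trig.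
  by rewrite big1 // => i _; rewrite !mxE /PMf G_ev // /ev eqxx.
apply/is_trig_mxP => i j ij; rewrite !mxE /PMf G_ev; last exact: ltnW.
by rewrite /ev ltn_eqF.
Qed.

Definition Kmx N := \adj (Bm N).

Lemma BK N : Bm N *m Kmx N = 1%:M.
Proof. by rewrite mul_mx_adj detB. Qed.

Lemma detK N : \det (Kmx N) = 1.
Proof. by have := det_mulmx (Bm N) (Kmx N); rewrite BK det1 detB mul1r. Qed.

Lemma redE N pos F : (forall i j (ilt : (i < N)%N) (jlt : (j < N)%N),
  ((\matrix_(i < N, j < N) PMf pos i j) *m Kmx N) (Ordinal ilt) (Ordinal jlt) = F i j) ->
  Dn N (PMf pos) = Dn N F.
Proof.
move=> H; rewrite /Dn -[LHS]mulr1 -(detK N) -det_mulmx; congr (\det _).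
by apply/matrixP => [[i ilt] [j jlt]]; rewrite [RHS]mxE -H.
Qed.

Lemma rowB N' pos r (rlt : (r < N'.+1)%N) j (jlt : (j < N'.+1)%N) k : (k < N'.+1)%N ->
  pos r = - (k.+1)%:Z ->
  ((\matrix_(i < N'.+1, j < N'.+1) PMf pos i j) *m Kmx N'.+1) (Ordinal rlt) (Ordinal jlt) = ev A k j.
Proof.
move=> klt E.
transitivity ((Bm N'.+1 *m Kmx N'.+1) (inord k) (Ordinal jlt)).
  by rewrite !mxE; apply: eq_bigr => l _; rewrite !mxE /PMf inordK // E.
rewrite BK !mxE /ev -val_eqE /= inordK // eq_sym; by case: (_ == _).
Qed.

End Main.

Theorem theorem5 (A : comAlgType CC) (h : nat -> A) (Hh : alg_indep h)
    (a : int -> CC) (mu : seq nat) (Hmu : is_partition mu) :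
  schur_a h mu a =
  \det (\matrix_(i < durfee mu, j < durfee mu)
          schur_a h (hook (frob_p mu i.+1) (frob_q mu j.+1)) a).
Proof.
move: Hmu => /andP [smu _].
case HN: (size mu) => [|N'].
  by move/size0nil: HN => ->; rewrite /schur_a /durfee /= !det_mx00.
pose d := durfee mu.
pose ts := [seq frob_q mu j.+1 | j <- iota 0 d].
pose ks := [seq (i - nth 0 mu i)%N | i <- iota d (N'.+1 - d)].
pose c i j := \sum_(l < N'.+1) PMf h a (posm mu) i l * Kmx h a N'.+1 l (inord j).
have dN : (d <= N'.+1)%N by rewrite -HN /d /durfee; apply: leq_trans (count_size _ _) _; rewrite size_iota.
have Hd i : (i < N'.+1)%N -> (i < d)%N = (i.+1 <= nth 0 mu i)%N by rewrite -HN; exact: durfee_nth.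
have Hc i t : (i < N'.+1)%N -> (i < conj_part mu t)%N = (t <= nth 0 mu i)%N by rewrite -HN; exact: conj_nth.
have conjN t : (conj_part mu t <= N'.+1)%N by rewrite -HN count_size.
have hookE i q : (i < d)%N -> (q < N'.+1)%N ->
    schur_a h (hook (frob_p mu i.+1) q) a = fN N'.+1 (c i) q.
  move=> id qN; rewrite schurE.
  have -> : size (hook (frob_p mu i.+1) q) = q.+1 by rewrite /= size_nseq.
  rewrite -(@pad _ h a q.+1 N'.+1) //; last first.
    move=> [|r] // /andP [H1 H2]; rewrite /posm /= nth_nseq.
    by have -> : (r < q)%N = false by lia.
  rewrite /fN; apply: redE => r j rlt jlt.
  case: r rlt => [|r] rlt /=.
    rewrite mxE /c; apply: eq_bigr => l _; rewrite mxE /PMf.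
    have -> : posm (hook (frob_p mu i.+1) q) 0 = posm mu i.
      rewrite /posm /frob_p /=; have := Hd i (leq_trans id dN); rewrite id => /esym H; lia.
    congr (_ * _); congr (fun_of_matrix _ _ _); apply/val_inj; by rewrite /= inordK.
  apply: rowB.
    by rewrite /bump; case: leqP => H /=; lia.
  by rewrite /posm /= nth_nseq /bump; case: (leqP q r) => H /=; lia.
have sts : sorted gtn ts.
  apply: sorted_map_iota => j _ jd /=; rewrite /frob_q.
  have h1 := Hc j.+1 j.+2 (leq_trans jd dN); rewrite -Hd ?(leq_trans jd dN) // jd in h1.
  have h2 : (conj_part mu j.+2 <= conj_part mu j.+1)%N by apply: sub_count => x /= H; apply: ltnW.
  lia.
have sks : sorted ltn ks.
  apply: sorted_map_iota => i H1 H2 /=.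
  have m1 : (nth 0 mu i.+1 <= nth 0 mu i)%N by apply: mu_mono => //; rewrite HN; lia.
  have m2 := Hd i ltac:(lia); have : (i < d)%N = false by lia.
  move=> m3; rewrite m3 in m2; lia.
have pe : perm_eq (ts ++ ks) (iota 0 N'.+1).
  have uts : uniq ts := sorted_uniq gtn_tr ltnn sts.
  have uks : uniq ks := sorted_uniq ltn_trans ltnn sks.
  have U : uniq (ts ++ ks).
    rewrite cat_uniq uts uks andbT /=; apply/hasPn => x /mapP [i Hi ->].
    apply/negP => /mapP [j Hj E]; rewrite mem_iota in Hi; rewrite mem_iota in Hj.
    have m2 := Hd i ltac:(lia); have : (i < d)%N = false by lia.
    move=> m3; rewrite m3 in m2; move: E; rewrite /frob_q.
    have := Hc i j.+1 ltac:(lia); case: leqP => H1 H2; lia.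
  have sub : {subset ts ++ ks <= iota 0 N'.+1}.
    move=> x; rewrite mem_cat mem_iota => /orP [/mapP [j Hj ->]| /mapP [i Hi ->]].
      by rewrite mem_iota in Hj; rewrite /frob_q; have := conjN j.+1; lia.
    by rewrite mem_iota in Hi; lia.
  have szle : (size (iota 0 N'.+1) <= size (ts ++ ks))%N by rewrite size_cat !size_map !size_iota; lia.
  have [_ E] := uniq_min_size U sub szle.
  by apply: uniq_perm => //; apply: iota_uniq.
rewrite schurE HN.
transitivity (Dn N'.+1 (Emx c d ks)).
  apply: redE => i j ilt jlt; rewrite /Emx; case: ifP => id.
    rewrite mxE /c; apply: eq_bigr => l _; rewrite mxE; congr (_ * _).
    congr (fun_of_matrix _ _ _); apply/val_inj; by rewrite /= inordK.
  have m2 := Hd i ilt; rewrite id in m2.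
  rewrite (nth_map 0%N); last by rewrite size_iota; lia.
  rewrite nth_iota; last lia.
  have -> : (d + (i - d) = i)%N by lia.
  by apply: rowB; [lia| rewrite /posm; lia].
rewrite (@core _ N'.+1 d c ts ks) //; last by rewrite size_map size_iota.
rewrite /Dn; congr (\det _); apply/matrixP => i j; rewrite !mxE.
rewrite (nth_map 0%N) ?size_iota // nth_iota // add0n hookE //.
rewrite /frob_q; move: (conjN j.+1); set C := conj_part _ _; move=> HC.
move: (nat_of_ord j) HC => jj HC; clear -HC; lia.
Qed.
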